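(* Let $c\in\mathbb{C}(t)\setminus\{0,1,t\}$ and $F_n$, $P_1$, $d$ as in the context. For every sufficiently small $\epsilon>0$ there exist $\delta>0$ and an integer $N>0$ such that $$\frac{1}{\deg F_n}\log\|F_n(1,t)\|-\frac{\log|P_1(1,0)|}{d}>-\epsilon$$ for all $t\in\mathbb{C}$ with $|t|<\delta$ and all $n\ge N$.
   Context: $F_{t_1,t_2}(z,w)=\big((t_1w^2-t_2z^2)^2,\;4t_2zw(w-z)(t_1w-t_2z)\big)$. $C=(c_1,c_2)$ is a pair of coprime homogeneous polynomials in $(t_1,t_2)$ of equal degree with $c(t)=c_1(t,1)/c_2(t,1)$. $F_1=F_{t_1,t_2}(C)/\gcd(F_{t_1,t_2}(C))=(P_1,Q_1)$, $d=\deg F_1$, $F_{n+1}=F_{t_1,t_2}(F_n)/t_2^2$, so $\deg F_n=4^{n-1}d$. $\|(z,w)\|=\max\{|z|,|w|\}$. *)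

(* Defs.v *)
From mathcomp Require Import all_boot all_algebra.
From mathcomp.real_closed Require Import complex.
From mathcomp Require Import mpoly.
From mathcomp Require Import reals exp.

Set Implicit Arguments.
Unset Strict Implicit.
Unset Printing Implicit Defensive.

Import GRing.Theory Num.Theory.
Local Open Scope ring_scope.

(* Homogeneous-coordinate polynomials in (t1, t2) = ('X_0, 'X_1) over C = R[i]. *)
Notation bpoly R := {mpoly (R[i])[2]}.

Definition t1 {R : realType} : bpoly R := 'X_(@Ordinal 2 0 isT).
Definition t2 {R : realType} : bpoly R := 'X_(@Ordinal 2 1 isT).

Definition Fmap {R : realType} (zw : bpoly R * bpoly R) : bpoly R * bpoly R :=
  let: (z, w) := zw in
  ((t1 * w ^+ 2 - t2 * z ^+ 2) ^+ 2,
   4%:R * t2 * z * w * (w - z) * (t1 * w - t2 * z)).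

Definition bdvd {R : realType} (a b : bpoly R) : Prop := exists c, b = c * a.

Definition is_gcd {R : realType} (g a b : bpoly R) : Prop :=
  [/\ bdvd g a, bdvd g b & forall h, bdvd h a -> bdvd h b -> bdvd h g].

Definition bcoprime {R : realType} (a b : bpoly R) : Prop := is_gcd 1 a b.

Definition pdeg {R : realType} (F : bpoly R * bpoly R) : nat :=
  (maxn (msize F.1) (msize F.2)).-1.

Definition ev {R : realType} (a b : R[i]) (p : bpoly R) : R[i] :=
  p.@[fun i : 'I_2 => if val i == 0%N then a else b].

Definition cabs {R : realType} (x : R[i]) : R := ComplexField.Normc.normc x.

Definition pnorm {R : realType} (z w : R[i]) : R := Num.max (cabs z) (cabs w).

(* Main.v *)
Require Import Defs.
From mathcomp Require Import all_boot all_algebra.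
From mathcomp.real_closed Require Import complex.
From mathcomp Require Import mpoly.
From mathcomp Require Import reals exp.
From mathcomp Require Import all_order.
From mathcomp Require Import zify ring lra.

Import GRing.Theory Num.Theory.
Local Open Scope ring_scope.

Section Factor.
Variables (n : nat) (K : idomainType).
Implicit Types p q : {mpoly K[n]}.

Local Notation ph i p := (pihomog mdeg i p).

Lemma ph_part {k p} : (msize p <= k)%N -> p = \sum_(i < k) ph i p.
Proof. exact: pihomog_partitionE. Qed.

Lemma ph_M_sum k {p q Kb} : (msize p <= Kb)%N -> (msize q <= Kb)%N ->
  ph k (p * q) = \sum_(i < Kb) \sum_(j < Kb)
      (if (i + j == k)%N then ph i p * ph j q else 0).
Proof.
move=> hp hq.
rewrite {1}(ph_part hp) {1}(ph_part hq) mulr_suml raddf_sum /=.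
apply: eq_bigr => i _; rewrite mulr_sumr raddf_sum /=.
apply: eq_bigr => j _.
have hij : ph i p * ph j q \is (i + j)%N.-homog by apply: dhomogM; apply: pihomogP.
case: eqP => [<-|/eqP ne]; first by rewrite pihomog_dE.
by rewrite (pihomog_ne0 ne hij).
Qed.

Lemma dsum1 (Kb : nat) (F : 'I_Kb -> 'I_Kb -> {mpoly K[n]}) (a b : 'I_Kb) :
  (forall i j, (i != a) || (j != b) -> F i j = 0) ->
  \sum_(i < Kb) \sum_(j < Kb) F i j = F a b.
Proof.
move=> h; rewrite (bigD1 a) //= (bigD1 b) //= big1 ?addr0; last first.
  by move=> j hj; apply: h; rewrite hj orbT.
rewrite big1 ?addr0 // => i hi; apply: big1 => j _; by apply: h; rewrite hi.
Qed.

Lemma ph_ext {p Kb} : p != 0 -> (msize p <= Kb)%N ->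
  exists b t, [/\ (b <= t < Kb)%N, ph b p != 0, ph t p != 0 &
     forall i, (i < Kb)%N -> ph i p != 0 -> (b <= i <= t)%N].
Proof.
move=> nzp hpK.
have exP : exists i, (i < Kb)%N && (ph i p != 0).
  have : [exists i : 'I_Kb, ph i p != 0].
    apply: contraT => /existsPn Hall; rewrite -(negbTE nzp); apply/eqP.
    by rewrite (ph_part hpK) big1 // => i _; apply/eqP; have := Hall i; rewrite negbK.
  by case/existsP => i hi; exists i; rewrite ltn_ord hi.
have ub : forall i, (i < Kb)%N && (ph i p != 0) -> (i <= Kb)%N.
  by move=> i /andP[/ltnW]. 
case: (ex_minnP exP) => b /andP[bK bnz] bmin.
case: (ex_maxnP exP ub) => t /andP[tK tnz] tmax.
exists b, t; split => //.
- by rewrite tK andbT; apply: bmin; rewrite tK tnz.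
- by move=> i iK inz; rewrite bmin ?tmax // iK.
Qed.

Lemma factor_homog {p q D} : p * q \is D.-homog -> p * q != 0 ->
  exists e, p \is e.-homog.
Proof.
move=> hD nz.
have nzp : p != 0 by apply: contraNneq nz => ->; rewrite mul0r.
have nzq : q != 0 by apply: contraNneq nz => ->; rewrite mulr0.
pose Kb := (msize p + msize q)%N.
have hpK : (msize p <= Kb)%N by rewrite leq_addr.
have hqK : (msize q <= Kb)%N by rewrite leq_addl.
case: (ph_ext nzp hpK) => bp [tp [/andP[bt tK] bnz tnz hp]].
case: (ph_ext nzq hqK) => bq [tq [/andP[bt' tK'] bnz' tnz' hq]].
have bK : (bp < Kb)%N by apply: leq_ltn_trans tK.
have bK' : (bq < Kb)%N by apply: leq_ltn_trans tK'.
have Eb : ph (bp + bq) (p * q) = ph bp p * ph bq q.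
  rewrite (ph_M_sum _ hpK hqK).
  rewrite (@dsum1 Kb _ (Ordinal bK) (Ordinal bK')) /= ?eqxx //.
  move=> i j /orP hij; case: eqP => // hs.
  have [->|nzi] := eqVneq (ph i p) 0; first by rewrite mul0r.
  have [->|nzj] := eqVneq (ph j q) 0; first by rewrite mulr0.
  have /andP[h1 _] := hp i (ltn_ord i) nzi.
  have /andP[h2 _] := hq j (ltn_ord j) nzj.
  exfalso; case: hij => /eqP; apply; apply: val_inj => /=; lia.
have Et : ph (tp + tq) (p * q) = ph tp p * ph tq q.
  rewrite (ph_M_sum _ hpK hqK).
  rewrite (@dsum1 Kb _ (Ordinal tK) (Ordinal tK')) /= ?eqxx //.
  move=> i j /orP hij; case: eqP => // hs.
  have [->|nzi] := eqVneq (ph i p) 0; first by rewrite mul0r.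
  have [->|nzj] := eqVneq (ph j q) 0; first by rewrite mulr0.
  have /andP[_ h1] := hp i (ltn_ord i) nzi.
  have /andP[_ h2] := hq j (ltn_ord j) nzj.
  exfalso; case: hij => /eqP; apply; apply: val_inj => /=; lia.
have eb : (bp + bq)%N = D.
  apply/eqP; apply: contraTT (mulf_neq0 bnz bnz') => ne.
  by rewrite negbK -Eb (pihomog_ne0 _ hD) // eq_sym.
have et : (tp + tq)%N = D.
  apply/eqP; apply: contraTT (mulf_neq0 tnz tnz') => ne.
  by rewrite negbK -Et (pihomog_ne0 _ hD) // eq_sym.
have ebt : bp = tp.
  move: eb et bt bt'; clear; lia.
exists bp.
suff -> : p = ph bp p by apply: pihomogP.
rewrite {1}(ph_part hpK) (bigD1 (Ordinal bK)) //= big1 ?addr0 // => i hi.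
apply/eqP; apply: contraTT hi => nzi; have := hp i (ltn_ord i) nzi.
rewrite -ebt => hh; rewrite negbK; apply/eqP; apply: val_inj => /=; lia.
Qed.
End Factor.

Lemma factor_homog2 {n : nat} {K : idomainType} {p q : {mpoly K[n]}} {D} :
  p * q \is D.-homog -> p * q != 0 ->
  exists e1 e2, [/\ p \is e1.-homog, q \is e2.-homog & (e1 + e2)%N = D].
Proof.
move=> hD nz.
have nzp : p != 0 by apply: contraNneq nz => ->; rewrite mul0r.
have nzq : q != 0 by apply: contraNneq nz => ->; rewrite mulr0.
case: (@factor_homog _ _ p q D hD nz) => e1 h1.
have hD' : q * p \is D.-homog by rewrite mulrC.
have nz' : q * p != 0 by rewrite mulrC.
case: (@factor_homog _ _ q p D hD' nz') => e2 h2.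
exists e1, e2; split => //.
exact: (dhomog_uniq nz (dhomogM h1 h2) hD).
Qed.

Section Two.
Context {R : realType}.
Local Notation C := (R[i]).
Local Notation i0 := (@Ordinal 2 0 isT).
Local Notation i1 := (@Ordinal 2 1 isT).

Lemma prod2 (a b : C) (m : 'X_{1..2}) :
  \prod_(i < 2) (if val i == 0%N then a else b) ^+ m i = a ^+ m i0 * b ^+ m i1.
Proof.
rewrite big_ord_recr big_ord_recr big_ord0 /= mul1r.
by congr (_ ^+ _ * _ ^+ _); congr (m _); apply: val_inj.
Qed.

Lemma mdeg2 (m : 'X_{1..2}) : mdeg m = (m i0 + m i1)%N.
Proof.
rewrite mdegE big_ord_recr big_ord_recr big_ord0 /=.
by congr (_ + m _ + m _)%N; apply: val_inj.
Qed.

Lemma evE (a b : C) (p : bpoly R) :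
  ev a b p = \sum_(m <- msupp p) p@_m * (a ^+ m i0 * b ^+ m i1).
Proof. by rewrite /ev mevalE; apply: eq_bigr => m _; rewrite prod2. Qed.

Lemma ev_t1 (a b : C) : ev a b t1 = a.
Proof. by rewrite /ev /t1 mevalXU. Qed.
Lemma ev_t2 (a b : C) : ev a b t2 = b.
Proof. by rewrite /ev /t2 mevalXU. Qed.
Lemma evM a b (p q : bpoly R) : ev a b (p * q) = ev a b p * ev a b q.
Proof. exact: mevalM. Qed.
Lemma evB a b (p q : bpoly R) : ev a b (p - q) = ev a b p - ev a b q.
Proof. exact: mevalB. Qed.
Lemma evX a b (p : bpoly R) k : ev a b (p ^+ k) = ev a b p ^+ k.
Proof.
elim: k => [|k ih]; first by rewrite !expr0 /ev meval1.
by rewrite !exprS evM ih.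
Qed.
Lemma ev_nat a b k : ev a b (k%:R : bpoly R) = k%:R.
Proof. by rewrite -mpolyC_nat /ev mevalC. Qed.

Lemma t2_dvd {p : bpoly R} {k} : p \is k.-homog -> ev 1 0 p = 0 ->
  exists p', p = t2 * p'.
Proof.
move=> hk h0.
have hm : forall m, m \in msupp p -> (0 < m i1)%N.
  move=> m hm; rewrite lt0n; apply/negP => /eqP m1.
  have hdeg : mdeg m = k := dhomog_mf hk hm; rewrite mdeg2 m1 addn0 in hdeg.
  move: h0; rewrite evE (bigD1_seq m hm (msupp_uniq p)) /= m1 expr1n expr0 !mulr1.
  rewrite big_seq_cond big1 ?addr0.
    by move=> hz; move: hm; rewrite mcoeff_msupp hz eqxx.
  move=> m' /andP[hm' ne]; case: (posnP (m' i1)) => [e|pos].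
    exfalso; move/negP: ne; apply; apply/eqP/mnmP => i.
    have hdeg' : mdeg m' = k := dhomog_mf hk hm'; rewrite mdeg2 e addn0 in hdeg'.
    case: i => [[|[|j]] ji] //.
    - by rewrite (_ : Ordinal ji = i0) ?hdeg ?hdeg' //; apply: val_inj.
    - by rewrite (_ : Ordinal ji = i1) ?e ?m1 //; apply: val_inj.
  by rewrite expr0n gtn_eqF // !mulr0.
exists (\sum_(m <- msupp p) p@_m *: 'X_[m - U_(i1)]).
rewrite mulr_sumr {1}(mpolyE p) big_seq [RHS]big_seq; apply: eq_bigr => m hmm.
rewrite -scalerAr /t2 -mpolyXD; congr (_ *: 'X_[_]).
apply/mnmP => i; rewrite mnmDE mnmBE mnm1E.
case: eqP => [<-|_]; last by rewrite subn0.
by rewrite subnKC //; apply: hm.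
Qed.

End Two.

Section Two2.
Context {R : realType}.
Local Notation C := (R[i]).

Lemma t1_homog : (t1 : bpoly R) \is 1.-homog.
Proof. by rewrite /t1 dhomogX; apply/eqP; apply: mdeg1. Qed.
Lemma t2_homog : (t2 : bpoly R) \is 1.-homog.
Proof. by rewrite /t2 dhomogX; apply/eqP; apply: mdeg1. Qed.
Lemma nat_homog k : (k%:R : bpoly R) \is 0.-homog.
Proof. by apply: rpredMn; apply: dhomog1. Qed.

Lemma msize_t2 : msize (t2 : bpoly R) = 2%N.
Proof. by rewrite /t2 msizeX; congr (_.+1); apply: mdeg1. Qed.

Lemma t2_nz : (t2 : bpoly R) != 0.
Proof. by rewrite -msize_poly_eq0 msize_t2. Qed.

Lemma t2_nonunit (c : bpoly R) : c * t2 != 1.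
Proof.
have [->|nz] := eqVneq c 0; first by rewrite mul0r eq_sym oner_neq0.
apply/eqP => h; have := congr1 (fun p => msize p) h.
rewrite msizeM ?t2_nz // msize_t2 msize1 addn2 /= => -[] /eqP.
by rewrite msize_poly_eq0 (negbTE nz).
Qed.


Lemma msize_homog {p : bpoly R} {e} : p \is e.-homog -> p != 0 -> msize p = e.+1.
Proof.
move=> he nz.
have h2 := dhomog_msize he.
by rewrite (dhomog_uniq nz he h2) prednK // lt0n msize_poly_eq0.
Qed.

Lemma msize_homog_le {p : bpoly R} {e} : p \is e.-homog -> (msize p <= e.+1)%N.
Proof.
have [->|nz] := eqVneq p 0; first by rewrite msize0.
by move=> he; rewrite (msize_homog he nz).
Qed.

Lemma pdeg_homog {P Q : bpoly R} {e} : P \is e.-homog -> Q \is e.-homog -> P != 0 ->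
  pdeg (P, Q) = e.
Proof.
move=> hP hQ nz; rewrite /pdeg /= (msize_homog hP nz).
have := msize_homog_le hQ; rewrite -!subn1; lia.
Qed.

Lemma Fmap_homog {P Q : bpoly R} {D} : P \is D.-homog -> Q \is D.-homog ->
  (Fmap (P, Q)).1 \is (4 * D + 2).-homog /\ (Fmap (P, Q)).2 \is (4 * D + 2).-homog.
Proof.
move=> hP hQ; rewrite /Fmap /=; split.
  have h : t1 * Q ^+ 2 - t2 * P ^+ 2 \is (2 * D + 1).-homog.
    rewrite rpredB //.
      by have := dhomogM t1_homog (dhomogMn 2 hQ); rewrite addnC mulnC.
    by have := dhomogM t2_homog (dhomogMn 2 hP); rewrite addnC mulnC.
  by have := dhomogMn 2 h; rewrite (_ : ((2 * D + 1) * 2 = 4 * D + 2)%N) //; lia.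
have hQP : Q - P \is D.-homog by rewrite rpredB.
have h2 : t1 * Q - t2 * P \is (1 + D).-homog.
  by rewrite rpredB //; apply: dhomogM => //; [apply: t1_homog|apply: t2_homog].
have := dhomogM (dhomogM (dhomogM (dhomogM (dhomogM (nat_homog 4) t2_homog) hP) hQ) hQP) h2.
by rewrite (_ : (0 + 1 + D + D + D + (1 + D) = 4 * D + 2)%N) //; lia.
Qed.

End Two2.

Section Main.
Context {R : realType}.
Local Notation C := (R[i]).

Lemma nat_nz k : (k.+1%:R : bpoly R) != 0.
Proof. by rewrite -mpolyC_nat mpolyC_eq0 pnatr_eq0. Qed.

Lemma t2sq_nz : (t2 ^+ 2 : bpoly R) != 0.
Proof. by rewrite expf_neq0 // t2_nz. Qed.

Lemma div_t2sq {X : bpoly R} {D} : t2 ^+ 2 * X \is (4 * D + 2).-homog ->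
  X \is (4 * D).-homog.
Proof.
have [->|nz] := eqVneq X 0; first by move=> _; apply: dhomog0.
move=> h.
have nz2 : t2 ^+ 2 * X != 0 by rewrite mulf_neq0 // t2sq_nz.
case: (factor_homog2 h nz2) => g1 [e1 [hg hX he]].
have h2 : (t2 ^+ 2 : bpoly R) \is 2.-homog by apply: (dhomogMn 2 t2_homog).
have := dhomog_uniq t2sq_nz hg h2 => eg.
have -> : (4 * D = e1)%N by move: he eg; clear; lia.
exact: hX.
Qed.

Lemma ev10_Fmap1 (P Q : bpoly R) :
  ev 1 0 (Fmap (P, Q)).1 = ev 1 0 Q ^+ 4.
Proof.
rewrite /Fmap /= evX evB !evM ev_t1 ev_t2 mul1r mul0r subr0.
by ring.
Qed.

Lemma step_val {P Q X : bpoly R} {D} : Q \is D.-homog ->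
  (Fmap (P, Q)).1 = t2 ^+ 2 * X ->
  ev 1 0 Q = 0 /\ ev 1 0 X = ev 1 0 P ^+ 4.
Proof.
move=> hQ hX.
have q0 : ev 1 0 Q = 0.
  have := congr1 (ev 1 0) hX; rewrite ev10_Fmap1 evM evX ev_t2 expr0n /= mul0r.
  by move/eqP; rewrite expf_eq0 /= => /eqP.
split => //.
case: (t2_dvd hQ q0) => Q' eQ.
move: hX; rewrite eQ /Fmap /=.
have -> : (t1 * (t2 * Q') ^+ 2 - t2 * P ^+ 2) ^+ 2 =
          t2 ^+ 2 * (t1 * t2 * Q' ^+ 2 - P ^+ 2) ^+ 2 :> bpoly R.
  by ring.
move/(mulfI t2sq_nz) <-.
rewrite evX evB !evM ev_t1 ev_t2 mulr0 mul0r sub0r.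
ring.
Qed.

End Main.

Section Main2.
Context {R : realType}.

Lemma alg_main (k : nat) (c1 c2 : bpoly R)
  (g P1 Q1 : bpoly R) (Fs : nat -> bpoly R * bpoly R) :
  c1 \is k.-homog -> c2 \is k.-homog -> bcoprime c1 c2 ->
  c2 != 0 -> c1 != 0 -> c1 != c2 -> t2 * c1 != t1 * c2 ->
  is_gcd g (Fmap (c1, c2)).1 (Fmap (c1, c2)).2 ->
  (Fmap (c1, c2)).1 = g * P1 -> (Fmap (c1, c2)).2 = g * Q1 ->
  Fs 1%N = (P1, Q1) ->
  (forall n, (1 <= n)%N ->
     (Fmap (Fs n)).1 = t2 ^+ 2 * (Fs n.+1).1 /\
     (Fmap (Fs n)).2 = t2 ^+ 2 * (Fs n.+1).2) ->
  exists e : nat,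
  [/\ pdeg (P1, Q1) = e, ev 1 0 P1 != 0,
      forall n, (1 <= n)%N -> pdeg (Fs n) = (4 ^ (n - 1) * e)%N &
      forall n, (1 <= n)%N -> ev 1 0 (Fs n).1 = ev 1 0 P1 ^+ (4 ^ (n - 1)) /\
                              ev 1 0 (Fs n).2 = 0].
Proof.
move=> hc1 hc2 _ nc2 nc1 n12 nt hg eA eB eF hF.
have [hA hB] := Fmap_homog hc1 hc2.
have nzB : (Fmap (c1, c2)).2 != 0.
  rewrite /Fmap /= !mulf_neq0 ?nat_nz ?t2_nz //.
    by rewrite subr_eq0 eq_sym.
  by rewrite subr_eq0 eq_sym.
have nzgQ : g * Q1 != 0 by rewrite -eB.
have nzg : g != 0 by apply: contraNneq nzgQ => ->; rewrite mul0r.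
have nzQ1 : Q1 != 0 by apply: contraNneq nzgQ => ->; rewrite mulr0.
move: hB; rewrite eB => hB.
case: (factor_homog2 hB nzgQ) => ga [e [hga hQ1 hge]].
have hP1 : P1 \is e.-homog.
  have [->|nzP] := eqVneq P1 0; first exact: dhomog0.
  have nzgP : g * P1 != 0 by rewrite mulf_neq0.
  move: hA; rewrite eA => hA.
  case: (factor_homog2 hA nzgP) => ga' [e' [hga' hP' hge']].
  have := dhomog_uniq nzg hga hga' => E.
  have -> : e = e' by move: hge hge' E; clear; lia.
  exact: hP'.
have inv : forall n,
   [/\ (Fs n.+1).1 \is (4 ^ n * e)%N.-homog,
       (Fs n.+1).2 \is (4 ^ n * e)%N.-homog,
       ev 1 0 (Fs n.+1).1 = ev 1 0 P1 ^+ (4 ^ n) &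
       ev 1 0 (Fs n.+1).2 = 0].
  elim => [|n [i1 i2 i3 i4]].
    have [h1 _] := hF 1%N isT; rewrite eF /= in h1 *.
    have [qv _] := step_val hQ1 h1.
    by rewrite expn0 mul1n expr1.
  have [h1 h2] := hF n.+1 isT.
  have [h1' _] := hF n.+2 isT.
  move: h1 h2 h1'; case E: (Fs n.+1) i1 i2 i3 i4 => [P Q] /= i1 i2 i3 i4 h1 h2.
  have [f1 f2] := Fmap_homog i1 i2.
  have e4 : (4 ^ n.+1 * e = 4 * (4 ^ n * e))%N by rewrite expnS mulnA.
  have j1 : (Fs n.+2).1 \is (4 ^ n.+1 * e)%N.-homog.
    by rewrite e4; apply: div_t2sq; rewrite -h1.
  have j2 : (Fs n.+2).2 \is (4 ^ n.+1 * e)%N.-homog.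
    by rewrite e4; apply: div_t2sq; rewrite -h2.
  case E2: (Fs n.+2) j1 j2 h1 h2 => [P' Q'] /= j1 j2 h1 h2 h1'.
  have [_ pv] := step_val i2 h1.
  have [qv _] := step_val j2 h1'.
  by split => //; rewrite pv i3 -exprM expnS mulnC.
have p1nz : ev 1 0 P1 != 0.
  apply/negP => /eqP p10.
  have [_ _ _ q10] := inv 0%N; rewrite eF /= in q10.
  case: (t2_dvd hP1 p10) => P' eP.
  case: (t2_dvd hQ1 q10) => Q' eQ.
  case: hg => _ _ /(_ (g * t2)) hgcd.
  have [c ec] : bdvd (g * t2) g.
    apply: hgcd.
      by exists P'; rewrite eA eP; ring.
    by exists Q'; rewrite eB eQ; ring.
  have : g * (1 - c * t2) = 0 by rewrite mulrBr mulr1 {1}ec; ring.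
  move/eqP; rewrite mulf_eq0 (negbTE nzg) /= subr_eq0 => /eqP h1.
  by move: (t2_nonunit c); rewrite -h1 eqxx.
have pnz : forall n, (Fs n.+1).1 != 0.
  move=> n; have [_ _ v _] := inv n.
  by apply: contraNneq (expf_neq0 (4 ^ n) p1nz) => h; rewrite -v h /ev meval0.
exists e; split => //.
- by rewrite (pdeg_homog hP1 hQ1) //; have := pnz 0%N; rewrite eF.
- case=> // n _; rewrite subSS subn0.
  have [i1 i2 _ _] := inv n.
  by rewrite [Fs _]surjective_pairing (pdeg_homog i1 i2 (pnz n)).
- case=> // n _; rewrite subSS subn0.
  by have [_ _ ? ?] := inv n.
Qed.
End Main2.

Section Cabs.
Context {R : realType}.
Local Notation C := (R[i]).
Implicit Types x y : C.

Lemma cabs_ge0 x : 0 <= cabs x.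
Proof. by case: x => a b; rewrite /cabs /= sqrtr_ge0. Qed.
Lemma cabsM x y : cabs (x * y) = cabs x * cabs y.
Proof. exact: ComplexField.Normc.normcM. Qed.
Lemma cabsD x y : cabs (x + y) <= cabs x + cabs y.
Proof. exact: le_normcD. Qed.
Lemma cabsN x : cabs (- x) = cabs x.
Proof. exact: normcN. Qed.
Lemma cabs0 : cabs (0 : C) = 0.
Proof. exact: ComplexField.Normc.normc0. Qed.
Lemma cabs1 : cabs (1 : C) = 1.
Proof. exact: ComplexField.Normc.normc1. Qed.
Lemma cabs_eq0 x : cabs x = 0 -> x = 0.
Proof. exact: ComplexField.Normc.eq0_normc. Qed.
Lemma cabsX x k : cabs (x ^+ k) = cabs x ^+ k.
Proof. by elim: k => [|k ih]; rewrite ?expr0 ?cabs1 // !exprS cabsM ih. Qed.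
Lemma cabs_nat k : cabs (k%:R : C) = k%:R.
Proof. by rewrite /cabs -[k%:R]/((1 : C) *+ k) normcMn -/(cabs 1) cabs1. Qed.
Lemma cabsB_ge x y : cabs x - cabs y <= cabs (x - y).
Proof.
have := cabsD (x - y) y; rewrite subrK; lra.
Qed.
Lemma cabsB_ge' x y : cabs y - cabs x <= cabs (x - y).
Proof.
by have := cabsB_ge y x; rewrite -[x - y]opprB cabsN.
Qed.
Lemma cabs_gt0 x : x != 0 -> 0 < cabs x.
Proof.
move=> nz; rewrite lt0r cabs_ge0 andbT; apply/eqP => /cabs_eq0 h.
by rewrite h eqxx in nz.
Qed.
End Cabs.

Import Order.TTheory GRing.Theory Num.Theory.

Section RB.
Context {R : realType}.

Lemma div_le {Z X S : R} : 0 < S -> X * S ^+ 2 <= Z * S ^+ 2 -> X <= Z.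
Proof. by move=> S0; rewrite ler_pM2r // exprn_gt0. Qed.

Lemma real_bound1 (a b S al Z : R) : 0 <= a -> 0 <= b -> 0 < S -> S <= 1/8 ->
  0 <= al -> Z * S ^+ 2 = al ^+ 2 -> b ^+ 2 - S * a ^+ 2 <= al ->
  a <= b -> b ^+ 4 / 4 <= Z.
Proof.
move=> a0 b0 S0 S8 al0 hZ h1 ab.
apply: (div_le S0); rewrite hZ.
have h2 : b ^+ 2 / 2 <= al.
  have : a ^+ 2 <= b ^+ 2 by rewrite lerXn2r ?nnegrE.
  nra.
have h3 : (b ^+ 2 / 2) ^+ 2 <= al ^+ 2 by rewrite lerXn2r ?nnegrE //; nra.
have h4 : S ^+ 2 <= 1 by nra.
have h5 : 0 <= b ^+ 4 by rewrite exprn_ge0.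
nra.
Qed.

Lemma real_bound2 (a b S al ga de Z W : R) : 0 <= a -> 0 <= b -> 0 < S -> S <= 1/8 ->
  0 <= al -> 0 <= ga -> 0 <= de ->
  Z * S ^+ 2 = al ^+ 2 -> W * S ^+ 2 = 4 * S * a * b * ga * de ->
  b ^+ 2 - S * a ^+ 2 <= al -> S * a ^+ 2 - b ^+ 2 <= al ->
  a - b <= ga -> b - S * a <= de ->
  b <= a -> a ^+ 4 / 4 <= Z \/ a ^+ 4 / 4 <= W.
Proof.
move=> a0 b0 S0 S8 al0 ga0 de0 hZ hW h1 h2 h3 h4 ba.
have [big|small] := lerP (S * a ^+ 2 / 2) al.
  left; apply: (div_le S0); rewrite hZ.
  have h5 : (S * a ^+ 2 / 2) ^+ 2 <= al ^+ 2.
    rewrite lerXn2r ?nnegrE //; have := exprn_ge0 2 a0; nra.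
  nra.
right; apply: (div_le S0); rewrite hW.
have hb2 : S * a ^+ 2 / 2 < b ^+ 2 by nra.
have hb2' : b ^+ 2 <= a ^+ 2 / 4 by nra.
have hb : b <= a / 2.
  rewrite -(@ler_pXn2r _ 2) ?nnegrE //; last by lra.
  nra.
have hb' : 2 * S * a <= b.
  rewrite -(@ler_pXn2r _ 2) ?nnegrE //; last by nra.
  nra.
have hga : a / 2 <= ga by lra.
have hde : b / 2 <= de by lra.
have p4 : 0 <= 4 * S * a * b.
  by repeat apply: mulr_ge0 => //; lra.
have pd : (a / 2) * (b / 2) <= ga * de.
  by apply: ler_pM => //; lra.
have k1 : S * a ^+ 2 * b ^+ 2 <= 4 * S * a * b * ga * de.
  have -> : 4 * S * a * b * ga * de = (4 * S * a * b) * (ga * de) by ring.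
  have -> : S * a ^+ 2 * b ^+ 2 = (4 * S * a * b) * ((a / 2) * (b / 2)) by field.
  exact: ler_wpM2l.
have pSa : 0 <= S * a ^+ 2 by apply: mulr_ge0; [lra|apply: exprn_ge0].
have k2 : S * a ^+ 2 * (S * a ^+ 2 / 2) <= S * a ^+ 2 * b ^+ 2.
  by apply: ler_wpM2l => //; lra.
have h0 : 0 <= S ^+ 2 * a ^+ 4 by apply: mulr_ge0; apply: exprn_ge0 => //; lra.
have e2 : S * a ^+ 2 * (S * a ^+ 2 / 2) = S ^+ 2 * a ^+ 4 / 2 by field.
have e3 : a ^+ 4 / 4 * S ^+ 2 = S ^+ 2 * a ^+ 4 / 4 by field.
rewrite e3; rewrite e2 in k2.
lra.
Qed.
End RB.

Section SB.
Context {R : realType}.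
Local Notation C := (R[i]).

Lemma maxl' (u v : R) : u <= Num.max u v.
Proof. by rewrite le_max lexx. Qed.
Lemma maxr' (u v : R) : v <= Num.max u v.
Proof. by rewrite le_max lexx orbT. Qed.

Lemma pnorm_ge0 (z w : C) : 0 <= pnorm z w.
Proof. by rewrite /pnorm le_max cabs_ge0. Qed.

Lemma step_bound (z w z' w' s : C) : cabs s <= 1/8 -> s != 0 ->
  s ^+ 2 * z' = (w ^+ 2 - s * z ^+ 2) ^+ 2 ->
  s ^+ 2 * w' = 4%:R * s * z * w * (w - z) * (w - s * z) ->
  pnorm z w ^+ 4 / 4 <= pnorm z' w'.
Proof.
move=> S8 s0 ez ew.
have S0 := cabs_gt0 _ s0.
have hZ : cabs z' * cabs s ^+ 2 = cabs (w ^+ 2 - s * z ^+ 2) ^+ 2.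
  by rewrite mulrC -cabsX -cabsM ez cabsX.
have hW : cabs w' * cabs s ^+ 2 =
   4 * cabs s * cabs z * cabs w * cabs (w - z) * cabs (w - s * z).
  by rewrite mulrC -cabsX -cabsM ew !cabsM cabs_nat.
have h1 := cabsB_ge (w ^+ 2) (s * z ^+ 2); rewrite cabsM !cabsX in h1.
have h2 := cabsB_ge' (w ^+ 2) (s * z ^+ 2); rewrite cabsM !cabsX in h2.
have h3 := cabsB_ge' w z.
have h4 := cabsB_ge w (s * z); rewrite cabsM in h4.
rewrite /pnorm.
have := cabs_ge0 z; have := cabs_ge0 w; have := cabs_ge0 (w - z);
have := cabs_ge0 (w - s * z); have := cabs_ge0 (w ^+ 2 - s * z ^+ 2);
have := cabs_ge0 z'; have := cabs_ge0 w'.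
move=> *; case: (lerP (cabs z) (cabs w)) => ab.
  rewrite le_max; apply/orP; left.
  by apply: (real_bound1 _ _ _ _ _ _ _ S0 S8 _ hZ h1 ab).
have ba : cabs w <= cabs z by apply: ltW.

case: (real_bound2 _ _ _ _ _ _ _ _ _ _ S0 S8 _ _ _ hZ hW h1 h2 h3 h4 ba) => //= h.
  by rewrite le_max h.
by rewrite le_max h orbT.
Qed.
End SB.

Section A3.
Context {R : realType}.
Local Notation C := (R[i]).

Lemma cabs_sum (I : Type) (r : seq I) (F : I -> C) :
  cabs (\sum_(i <- r) F i) <= \sum_(i <- r) cabs (F i).
Proof.
elim: r => [|x r ih]; first by rewrite !big_nil cabs0.
rewrite !big_cons; apply: le_trans (cabsD _ _) _; lra.
Qed.

Lemma pow_diff (s : C) k : cabs s <= 1 -> cabs (s ^+ k - 0 ^+ k) <= cabs s.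
Proof.
move=> s1; case: k => [|k]; first by rewrite !expr0 subrr cabs0 cabs_ge0.
rewrite expr0n /= subr0 cabsX exprS.
have h0 := cabs_ge0 s.
have : cabs s ^+ k <= 1 by apply: exprn_ile1.
nra.
Qed.

Lemma ev_cont (P : bpoly R) (s : C) : cabs s <= 1 ->
  cabs (ev 1 s P - ev 1 0 P) <= cabs s * \sum_(m <- msupp P) cabs (P@_m).
Proof.
move=> s1; rewrite !evE -sumrB mulr_sumr.
apply: le_trans (cabs_sum _ _ _) _; apply: ler_sum => m _.
rewrite -mulrBr cabsM expr1n !mul1r mulrC.
by apply: ler_wpM2r; [apply: cabs_ge0 | apply: pow_diff].
Qed.

Lemma ev_Fmap (P Q : bpoly R) (s : C) :
  ev 1 s (Fmap (P, Q)).1 = (ev 1 s Q ^+ 2 - s * ev 1 s P ^+ 2) ^+ 2 /\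
  ev 1 s (Fmap (P, Q)).2 = 4%:R * s * ev 1 s P * ev 1 s Q * (ev 1 s Q - ev 1 s P)
                             * (ev 1 s Q - s * ev 1 s P).
Proof.
rewrite /Fmap /=; split.
  by rewrite evX evB !evM ev_t1 ev_t2; ring.
by rewrite !evM !evB !evM ev_t1 ev_t2 ev_nat; ring.
Qed.

End A3.

Lemma ln_step {R : realType} (x y : R) : 0 < x -> x ^+ 4 / 4 <= y ->
  0 < y /\ 4 * ln x - ln 4 <= ln y.
Proof.
move=> x0 h.
have p : 0 < x ^+ 4 / 4 by apply: divr_gt0 => //; apply: exprn_gt0.
have y0 : 0 < y by apply: lt_le_trans h.
split => //.
have := h; rewrite -ler_ln ?posrE // => h'.
apply: le_trans h'; rewrite ln_div ?posrE ?exprn_gt0 // lnXn // mulr_natl.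
by rewrite -[4%:R]/(4 : R).
Qed.

Lemma chain_step {R : realType} (x y a b L : R) :
  a - b + L <= 3 * x -> 4 * x - L <= y -> 4 * a - 4 * b + L <= 3 * y.
Proof. move=> h1 h2; lra. Qed.

Lemma final_ineq {R : realType} (lnF l L eps A B E : R) :
  0 < A -> 0 < B -> 1 <= E -> 0 < L -> L < 4 -> 16 < eps * B -> 0 < eps ->
  3 * (B * A) * l - 4 * A * L + L <= 3 * lnF ->
  - eps < lnF / (B * A * E) - l / E.
Proof.
move=> A0 B0 E1 L0 L4 eB e0 h.
have E0 : 0 < E by lra.
have P0 : 0 < B * A * E by rewrite !mulr_gt0.
have -> : lnF / (B * A * E) - l / E = (lnF - B * A * l) / (B * A * E).
  by field; rewrite !lt0r_neq0.
rewrite ltr_pdivlMr //.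
have k1 : eps * B <= eps * B * E.
  by rewrite ler_peMr //; apply: mulr_ge0; apply: ltW.
have k2 : 4 * L / 3 < eps * B * E by lra.
have k3 : A * (4 * L / 3) < A * (eps * B * E) by rewrite ltr_pM2l.
have k4 : B * A * l - 4 * A * L / 3 <= lnF.
  have : 0 <= A * L by apply: mulr_ge0; apply: ltW.
  lra.
have e1 : - eps * (B * A * E) = - (A * (eps * B * E)) by ring.
have e2 : A * (4 * L / 3) = 4 * A * L / 3 by ring.
lra.
Qed.

Lemma quarter_le {R : realType} (X : R) : 0 <= X -> X / 4 <= X.
Proof. move=> h; lra. Qed.

Theorem lemma4p5 (R : realType) (k : nat) (c1 c2 : bpoly R)
  (g P1 Q1 : bpoly R) (Fs : nat -> bpoly R * bpoly R) :
  c1 \is k.-homog -> c2 \is k.-homog -> bcoprime c1 c2 ->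
  c2 != 0 -> c1 != 0 -> c1 != c2 -> t2 * c1 != t1 * c2 ->
  is_gcd g (Fmap (c1, c2)).1 (Fmap (c1, c2)).2 ->
  (Fmap (c1, c2)).1 = g * P1 -> (Fmap (c1, c2)).2 = g * Q1 ->
  Fs 1%N = (P1, Q1) ->
  (forall n, (1 <= n)%N ->
     (Fmap (Fs n)).1 = t2 ^+ 2 * (Fs n.+1).1 /\
     (Fmap (Fs n)).2 = t2 ^+ 2 * (Fs n.+1).2) ->
  let d := pdeg (P1, Q1) in
  exists eps0 : R, 0 < eps0 /\
  forall eps : R, 0 < eps -> eps < eps0 ->
  exists (delta : R) (N : nat), 0 < delta /\ (0 < N)%N /\
  forall (t : R[i]) (n : nat), cabs t < delta -> (N <= n)%N ->
    let nF := pnorm (ev 1 t (Fs n).1) (ev 1 t (Fs n).2) in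
    0 < nF /\
    ln nF / (pdeg (Fs n))%:R - ln (cabs (ev 1 0 P1)) / d%:R > - eps.
Proof.
move=> hc1 hc2 hcop nc2 nc1 n12 nt hg eA eB eF hF d.
have [e [hd p1nz hpdeg hval]] :=
  @alg_main R k c1 c2 g P1 Q1 Fs hc1 hc2 hcop nc2 nc1 n12 nt hg eA eB eF hF.
set p0 := ev 1 0 P1 in p1nz hval *.
have p0pos : 0 < cabs p0 := cabs_gt0 _ p1nz.
set L := ln (4 : R).
have L0 : 0 < L by apply: ln_gt0; lra.
have L4 : L < 4 by apply: ln_sublinear; lra.
exists 1; split => // eps eps0 _.
have [M hM] : exists M : nat, 16 / eps < M%:R.
  exists (Num.Def.archi_bound (16 / eps)); apply: archi_boundP.
  by apply: divr_ge0 => //; apply: ltW.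
pose N := M.+1.
pose PN := (Fs N).1.
have [vN _] := hval N isT.
rewrite /= subn1 /= in vN.
pose CN := \sum_(m <- msupp PN) cabs (PN@_m).
have CN0 : 0 <= CN by apply: sumr_ge0 => m _; apply: cabs_ge0.
set V := cabs (ev 1 0 PN).
have V0 : V = cabs p0 ^+ (4 ^ M) by rewrite /V /PN vN cabsX.
have Vpos : 0 < V by rewrite V0 exprn_gt0.
pose delta := Num.min (1 / 8 : R) (V / (2 * (CN + 1))).
exists delta, N; split.
  rewrite lt_min; apply/andP; split; first lra.
  by apply: divr_gt0 => //; lra.
split => // t n ht hn.
move: ht; rewrite lt_min => /andP[ht8 htV].
pose Nf j := pnorm (ev 1 t (Fs j).1) (ev 1 t (Fs j).2).
have base : V / 2 <= Nf N.
  have t1 : cabs t <= 1 by lra.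
  have h1 := ev_cont PN t t1.
  have h2 := cabsB_ge' (ev 1 t PN) (ev 1 0 PN).
  have h3 : cabs t * (2 * (CN + 1)) < V by rewrite -ltr_pdivlMr //; lra.
  have h4 : cabs (ev 1 t PN) <= Nf N by rewrite /Nf /pnorm le_max lexx.
  have t0 := cabs_ge0 t.
  rewrite -/CN -/V in h1 h2.
  nra.
have step : forall j, (1 <= j)%N -> Nf j ^+ 4 / 4 <= Nf j.+1.
  move=> j hj.
  have [h1 h2] := hF j hj.
  have [v1 v2] := hval j hj.
  have [v1' _] := hval j.+1 isT.
  have [t0|tnz] := eqVneq t 0.
    rewrite /Nf /pnorm t0 v1 v2 v1' cabs0 !cabsX subSS subn0.
    have X0 : 0 <= cabs p0 ^+ (4 ^ (j - 1)) by apply: exprn_ge0; apply: cabs_ge0.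
    rewrite (max_l X0) le_max; apply/orP; left.
    rewrite -exprM (_ : (4 ^ (j - 1) * 4 = 4 ^ j)%N); last first.
      by rewrite -expnSr subn1 prednK.
    have : 0 <= cabs p0 ^+ (4 ^ j) by apply: exprn_ge0; apply: cabs_ge0.
    exact: quarter_le.
  rewrite /Nf; move: h1 h2; case E: (Fs j) => [P Q] /= h1 h2.
  have [e1 e2] := ev_Fmap P Q t.
  apply: (step_bound _ _ _ _ t) => //; first lra.
    by rewrite -e1 /= h1 evM evX ev_t2.
  by rewrite -e2 /= h2 evM evX ev_t2.
set l := ln (cabs p0).
have lnV : ln V = (4 ^ M)%:R * l by rewrite V0 lnXn // mulr_natl.
have chain : forall j, (0 < Nf (N + j)%N) /\
    (3 * (4 ^ (M + j))%:R * l - (4 ^ j.+1)%:R * L + L <= 3 * ln (Nf (N + j)%N)).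
  elim => [|j [pos ih]].
    rewrite !addn0 expn1.
    have pos : 0 < Nf N by apply: lt_le_trans base; lra.
    split => //.
    have h1 : ln (V / 4) <= ln (Nf N).
      rewrite ler_ln ?posrE //; last by apply: divr_gt0 => //; lra.
      lra.
    have q4 : (0 : R) < 4 by lra.
    rewrite ln_div ?posrE // lnV -/L in h1.
    lra.
  have hs := step (N + j)%N (leq_trans (isT : (0 < N)%N) (leq_addr _ _)).
  have [pos' h'] := ln_step _ _ pos hs.
  rewrite addnS; split => //.
  have -> : 3 * (4 ^ (M + j.+1))%:R * l = 4 * (3 * (4 ^ (M + j))%:R * l).
    by rewrite addnS expnS natrM; ring.
  have -> : (4 ^ j.+2)%:R * L = 4 * ((4 ^ j.+1)%:R * L) :> R.
    by rewrite expnS natrM; ring.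
  exact: chain_step ih h'.
have [j ->] : exists j, n = (N + j)%N by exists (n - N)%N; rewrite subnKC.
have [pos ih] := chain j.
split => //.
rewrite -/(Nf (N + j)%N) hpdeg; last by rewrite addSn.
rewrite /d hd (_ : (N + j - 1 = M + j)%N); last by rewrite addSn subn1.
have [->|epos] := posnP e.
  by rewrite muln0 !invr0 !mulr0 subrr oppr_lt0.
rewrite natrM expnD natrM.
apply: (final_ineq _ _ _ _ _ _ _ _ _ _ L0 L4 _ eps0).
- by rewrite ltr0n expn_gt0.
- by rewrite ltr0n expn_gt0.
- by rewrite ler1n.
- have h4M : (M%:R : R) < (4 ^ M)%:R by rewrite ltr_nat ltn_expl.
  have : 16 < eps * M%:R by move: hM; rewrite ltr_pdivrMr // mulrC.
  have : eps * M%:R < eps * (4 ^ M)%:R by rewrite ltr_pM2l.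
  lra.
- move: ih; rewrite expnD expnS !natrM.
  by [].
Qed.
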